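(* Let $0<r<1$ and let $T$ be an invertible operator on a Hilbert space $\mathcal H$. Then $T\in C_{1,r}$ if and only if there exist a Hilbert space $\mathcal K$, an isometry $V:\mathcal H\to\mathcal K$ and an invertible operator $J\in\mathcal C_{1,r}$ on $\mathcal K$ such that $T^n=V^*J^nV$ for all integers $n$.
   Context: $C_{1,r}=\{T: T\text{ invertible},\ \|T\|\le1,\ \|rT^{-1}\|\le1\}$. $\mathcal C_{1,r}$ is the class of operators $J$ on a Hilbert space $\mathcal K$ for which there exist orthogonal projections $P_0,P_1$ on $\mathcal K$ with $P_0+P_1=I_{\mathcal K}$ and $J^*J=P_0+r^2P_1$ (equivalently, for invertible $J$, $(1+r^2)I-J^*J-r^2J^{-1}(J^{-1})^*=0$). *)

(* Defs.v *)
From mathcomp Require Import all_boot all_order all_algebra.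
From mathcomp Require Import complex reals.
Set Implicit Arguments. Unset Strict Implicit. Unset Printing Implicit Defensive.
Import Order.TTheory GRing.Theory Num.Theory.
Local Open Scope ring_scope.

Record Hilbert (R : realType) := Hilbert_ {
  hsort :> lmodType R[i];
  hinner : hsort -> hsort -> R[i];
  hinnerDl : forall (a : R[i]) (x y z : hsort),
      hinner (a *: x + y) z = a * hinner x z + hinner y z;
  hinnerC : forall x y : hsort, hinner y x = (hinner x y)^*;
  hinner_ge0 : forall x : hsort, 0 <= hinner x x;
  hinner_eq0 : forall x : hsort, hinner x x = 0 -> x = 0;
  hcomplete : forall u : nat -> hsort,
      (forall e : R, 0 < e -> exists N : nat, forall m n : nat,
          (N <= m)%N -> (N <= n)%N ->
          Num.sqrt (complex.Re (hinner (u m - u n) (u m - u n))) < e) ->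
      exists l : hsort, forall e : R, 0 < e -> exists N : nat, forall n : nat,
          (N <= n)%N -> Num.sqrt (complex.Re (hinner (u n - l) (u n - l))) < e
}.

Section Ops.
Variable R : realType.

Definition inner (H : Hilbert R) (x y : H) : R[i] := hinner x y.
Definition hnorm (H : Hilbert R) (x : H) : R :=
  Num.sqrt (complex.Re (hinner x x)).

Definition bounded_op (H K : Hilbert R) (f : H -> K) : Prop :=
  (forall (a : R[i]) (x y : H), f (a *: x + y) = a *: f x + f y) /\
  exists M : R, forall x : H, hnorm (f x) <= M * hnorm x.

Definition is_inverse (H : Hilbert R) (T S : H -> H) : Prop :=
  bounded_op T /\ bounded_op S /\ (forall x, S (T x) = x) /\ (forall x, T (S x) = x).

Definition invertible_op (H : Hilbert R) (T : H -> H) : Prop :=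
  exists S, is_inverse T S.

Definition is_adjoint (H K : Hilbert R) (T : H -> K) (Ts : K -> H) : Prop :=
  bounded_op T /\ bounded_op Ts /\
  forall (x : H) (y : K), inner (T x) y = inner x (Ts y).

Definition opnorm_le (H K : Hilbert R) (A : H -> K) (c : R) : Prop :=
  forall x : H, hnorm (A x) <= c * hnorm x.

Definition hisometry (H K : Hilbert R) (V : H -> K) : Prop :=
  bounded_op V /\ forall x : H, hnorm (V x) = hnorm x.

Definition orth_proj (H : Hilbert R) (P : H -> H) : Prop :=
  bounded_op P /\ (forall x, P (P x) = P x) /\
  (forall x y, inner (P x) y = inner x (P y)).

Definition zpow (H : Hilbert R) (T S : H -> H) (n : int) : H -> H :=
  match n with
  | Posz k => iter k T
  | Negz k => iter k.+1 S
  end.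

Definition C1r (r : R) (H : Hilbert R) (T : H -> H) : Prop :=
  exists S : H -> H, is_inverse T S /\ opnorm_le T 1 /\
    opnorm_le (fun x => (r%:C)%C *: S x) 1.

Definition calC1r (r : R) (K : Hilbert R) (J : K -> K) : Prop :=
  bounded_op J /\
  exists (Js P0 P1 : K -> K), is_adjoint J Js /\ orth_proj P0 /\ orth_proj P1 /\
    (forall x, P0 x + P1 x = x) /\
    (forall x, Js (J x) = P0 x + ((r ^+ 2)%:C)%C *: P1 x).

End Ops.

(* Main.v *)
Require Import Defs.
From mathcomp Require Import all_boot all_order all_algebra.
From mathcomp Require Import complex reals.
From mathcomp Require Import ring lra.
From mathcomp Require boolp.
Import Order.TTheory GRing.Theory Num.Theory.
Local Open Scope ring_scope.
Set Implicit Arguments. Unset Strict Implicit. Unset Printing Implicit Defensive.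
Section Basics.
Variable R : realType.

Lemma conjC_C (a b : R) : Num.conj (a +i* b)%C = (a -i* b)%C.
Proof. by []. Qed.
Lemma ReD (z w : R[i]) : complex.Re (z + w) = complex.Re z + complex.Re w.
Proof. by case: z; case: w. Qed.
Lemma ReN (z : R[i]) : complex.Re (- z) = - complex.Re z.
Proof. by case: z. Qed.
Lemma ReB (z w : R[i]) : complex.Re (z - w) = complex.Re z - complex.Re w.
Proof. by rewrite ReD ReN. Qed.
Lemma ReRM (c : R) (z : R[i]) : complex.Re ((c%:C)%C * z) = c * complex.Re z.
Proof. case: z => a b /=; ring. Qed.
Lemma ImB (z w : R[i]) : complex.Im (z - w) = complex.Im z - complex.Im w.
Proof. by case: z; case: w. Qed.
Lemma ReJ (z : R[i]) : complex.Re (Num.conj z) = complex.Re z.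
Proof. by case: z. Qed.
Lemma Re0 : complex.Re (0 : R[i]) = 0. Proof. by []. Qed.
Lemma ReR (c : R) : complex.Re ((c%:C)%C) = c. Proof. by []. Qed.
Lemma conjR (c : R) : Num.conj ((c%:C)%C) = (c%:C)%C.
Proof. apply/eqP; rewrite eq_complex /= oppr0 !eqxx //. Qed.
Lemma ReiJ (z : R[i]) : complex.Re (Num.conj 'i%C * z) = complex.Im z.
Proof. case: z => a b /=; ring. Qed.
Lemma c_eq0 (z : R[i]) : complex.Re z = 0 -> complex.Im z = 0 -> z = 0.
Proof. by case: z => a b /= -> ->. Qed.
Lemma RC_D (a b : R) : ((a + b)%:C)%C = (a%:C)%C + (b%:C)%C :> R[i].
Proof. by rewrite rmorphD. Qed.
Lemma RC_M (a b : R) : ((a * b)%:C)%C = (a%:C)%C * (b%:C)%C :> R[i].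
Proof. by rewrite rmorphM. Qed.
Lemma RCN1 : (((-1 : R)%:C)%C) = -1 :> R[i].
Proof. by apply/eqP; rewrite eq_complex /= oppr0 !eqxx. Qed.
Lemma RC1 : (((1 : R)%:C)%C) = 1 :> R[i].
Proof. by []. Qed.
Lemma ge0C (z : R[i]) : 0 <= z -> z = ((complex.Re z)%:C)%C /\ 0 <= complex.Re z.
Proof. by case: z => a b; rewrite lecE /= => /andP [/eqP -> ->]. Qed.
End Basics.
Section HBasics.
Variable R : realType.
Variable H : Hilbert R.
Implicit Types x y z : H.
Local Notation ip := (@hinner R H).
Local Notation nrm := (@hnorm R H).
Local Notation RE := (@complex.Re R).

Lemma ip0l y : ip 0 y = 0.
Proof.
have := hinnerDl 1 (0:H) 0 y; rewrite scale1r addr0 mul1r => h.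
by apply: (addrI (ip 0 y)); rewrite addr0 -h.
Qed.
Lemma ipDl x y z : ip (x + y) z = ip x z + ip y z.
Proof. by have := hinnerDl 1 x y z; rewrite scale1r mul1r. Qed.
Lemma ipZl a x z : ip (a *: x) z = a * ip x z.
Proof. by have := hinnerDl a x 0 z; rewrite addr0 ip0l addr0. Qed.
Lemma ipNl x z : ip (- x) z = - ip x z.
Proof. by rewrite -scaleN1r ipZl mulN1r. Qed.
Lemma ipBl x y z : ip (x - y) z = ip x z - ip y z.
Proof. by rewrite ipDl ipNl. Qed.
Lemma ipC x y : ip y x = Num.conj (ip x y).
Proof. exact: hinnerC. Qed.
Lemma ipDr x y z : ip z (x + y) = ip z x + ip z y.
Proof. by rewrite ipC ipDl rmorphD /= -!ipC. Qed.
Lemma ipZr a x z : ip z (a *: x) = Num.conj a * ip z x.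
Proof. by rewrite ipC ipZl rmorphM /= -ipC. Qed.
Lemma ip0r y : ip y 0 = 0.
Proof. by rewrite ipC ip0l rmorph0. Qed.
Lemma ipNr x z : ip z (- x) = - ip z x.
Proof. by rewrite ipC ipNl rmorphN /= -ipC. Qed.
Lemma ipBr x y z : ip z (x - y) = ip z x - ip z y.
Proof. by rewrite ipDr ipNr. Qed.
Lemma ipRr (c : R) x z : ip z ((c%:C)%C *: x) = (c%:C)%C * ip z x.
Proof. by rewrite ipZr conjR. Qed.
Lemma Re_ipC x y : RE (ip y x) = RE (ip x y).
Proof. by rewrite ipC ReJ. Qed.

Lemma ip_self x : ip x x = ((RE (ip x x))%:C)%C /\ 0 <= RE (ip x x).
Proof. exact: ge0C (hinner_ge0 x). Qed.
Lemma nrm_ge0 x : 0 <= nrm x.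
Proof. exact: sqrtr_ge0. Qed.
Lemma nrm2 x : nrm x ^+ 2 = RE (ip x x).
Proof. by rewrite /hnorm sqr_sqrtr //; case: (ip_self x). Qed.
Lemma ip_selfN x : ip x x = ((nrm x ^+ 2)%:C)%C.
Proof. by rewrite nrm2; case: (ip_self x). Qed.
Lemma nrm0 : nrm 0 = 0.
Proof. by rewrite /hnorm ip0l Re0 sqrtr0. Qed.
Lemma nrm_eq0 x : nrm x = 0 -> x = 0.
Proof.
move=> h; apply: hinner_eq0; rewrite ip_selfN h expr0n /=.
by apply/eqP; rewrite eq_complex /= !eqxx.
Qed.

Lemma nrm2_lin (t : R) x y :
  nrm (x + (t%:C)%C *: y) ^+ 2 = nrm x ^+ 2 + 2 * t * RE (ip x y) + t ^+ 2 * nrm y ^+ 2.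
Proof.
rewrite !nrm2 !(ipDl, ipDr, ipZl, ipRr) !ReD !ReRM (Re_ipC x y). ring.
Qed.

Lemma CS x y : RE (ip x y) <= nrm x * nrm y.
Proof.
have [y0|ny0] := eqVneq (nrm y) 0.
  by rewrite (nrm_eq0 y0) ip0r Re0 mulr_ge0 ?nrm_ge0.
have ny : 0 < nrm y by rewrite lt_def ny0 nrm_ge0.
set a := RE (ip x y).
have h := nrm2_lin (- a / nrm y ^+ 2) x y.
have h0 := sqr_ge0 (nrm (x + ((- a / nrm y ^+ 2)%:C)%C *: y)).
rewrite h in h0.
have e : nrm x ^+ 2 + 2 * (- a / nrm y ^+ 2) * a + (- a / nrm y ^+ 2) ^+ 2 * nrm y ^+ 2
   = nrm x ^+ 2 - a ^+ 2 / nrm y ^+ 2.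
  by field.
rewrite -/a e subr_ge0 ler_pdivrMr ?exprn_gt0 // in h0.
have hx := nrm_ge0 x.
have hxy : 0 <= nrm x * nrm y by rewrite mulr_ge0 // ltW.
rewrite -exprMn in h0.
nra.
Qed.

Lemma CSN x y : - (nrm x * nrm y) <= RE (ip x y).
Proof.
have := CS (- x) y; rewrite ipNl ReN.
have -> : nrm (- x) = nrm x by rewrite /hnorm ipNl ipNr opprK.
lra.
Qed.

Lemma nrmN x : nrm (- x) = nrm x.
Proof. by rewrite /hnorm ipNl ipNr opprK. Qed.
Lemma nrmB x y : nrm (x - y) = nrm (y - x).
Proof. by rewrite -nrmN opprB. Qed.

Lemma nrmD x y : nrm (x + y) <= nrm x + nrm y.
Proof.
have h := nrm2_lin 1 x y; rewrite scale1r in h.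
have c := CS x y.
have h1 := nrm_ge0 (x + y); have h2 := nrm_ge0 x; have h3 := nrm_ge0 y.
nra.
Qed.

Lemma nrmR (c : R) x : nrm ((c%:C)%C *: x) = `|c| * nrm x.
Proof.
by rewrite /hnorm ipZl ipRr !ReRM mulrA -expr2 sqrtrM ?sqr_ge0 // sqrtr_sqr.
Qed.

Lemma nrmB3 x y z : nrm (x - z) <= nrm (x - y) + nrm (y - z).
Proof. by have := nrmD (x - y) (y - z); rewrite addrA subrK. Qed.

Lemma ext_l x y : (forall z, ip x z = ip y z) -> x = y.
Proof.
move=> h; apply/eqP; rewrite -subr_eq0; apply/eqP/hinner_eq0.
by rewrite ipBl h subrr.
Qed.
Lemma ext_r x y : (forall z, ip z x = ip z y) -> x = y.
Proof.
move=> h; apply: ext_l => z; by rewrite ipC h -ipC.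
Qed.

Lemma ext_Re x y : (forall z, RE (ip x z) = RE (ip y z)) -> x = y.
Proof.
move=> h; apply: ext_l => z; apply/eqP; rewrite -subr_eq0; apply/eqP.
apply: c_eq0; first by rewrite ReB h subrr.
have := h ('i%C *: z); rewrite !ipZr !ReiJ => e.
by rewrite ImB e subrr.
Qed.

End HBasics.
Section Lin.
Variable R : realType.
Definition lin (H K : Hilbert R) (f : H -> K) :=
  forall (a : R[i]) x y, f (a *: x + y) = a *: f x + f y.
Definition bnd (H K : Hilbert R) (f : H -> K) :=
  exists M, 0 <= M /\ forall x, hnorm (f x) <= M * hnorm x.

Lemma bounded_opP (H K : Hilbert R) (f : H -> K) : bounded_op f <-> lin f /\ bnd f.
Proof.
split=> [[hl [M hM]]|[hl [M [_ hM]]]]; last by split=> //; exists M.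
split=> //; exists `|M|; split=> // x.
apply: le_trans (hM x) _; apply: ler_wpM2r; first exact: nrm_ge0.
exact: ler_norm.
Qed.

Variables H K : Hilbert R.
Variable f : H -> K.
Hypothesis hf : lin f.
Lemma lin0 : f 0 = 0.
Proof.
have := hf 1 0 0; rewrite !scale1r addr0 => h.
by apply: (addrI (f 0)); rewrite addr0 -h.
Qed.
Lemma linD x y : f (x + y) = f x + f y.
Proof. by have := hf 1 x y; rewrite !scale1r. Qed.
Lemma linZ a x : f (a *: x) = a *: f x.
Proof. by have := hf a x 0; rewrite !addr0 lin0 addr0. Qed.
Lemma linN x : f (- x) = - f x.
Proof. by rewrite -scaleN1r linZ scaleN1r. Qed.
Lemma linB x y : f (x - y) = f x - f y.
Proof. by rewrite linD linN. Qed.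

End Lin.

Section Ops.
Variable R : realType.
Variable H : Hilbert R.
Local Notation nrm := (@hnorm R H).

Record op := Op { app :> H -> H; op_lin : @lin _ H H app; op_bnd : @bnd _ H H app }.

Lemma opD (f : op) x y : f (x + y) = f x + f y.
Proof. exact: linD (op_lin f) x y. Qed.
Lemma opZ (f : op) a x : f (a *: x) = a *: f x.
Proof. exact: linZ (op_lin f) a x. Qed.
Lemma opN (f : op) x : f (- x) = - f x.
Proof. exact: linN (op_lin f) x. Qed.
Lemma opB (f : op) x y : f (x - y) = f x - f y.
Proof. exact: linB (op_lin f) x y. Qed.
Lemma op0 (f : op) : f 0 = 0.
Proof. exact: lin0 (op_lin f). Qed.
Lemma op_bo (f : op) : bounded_op f.
Proof. exact: (proj2 (bounded_opP (app f)) (conj (op_lin f) (op_bnd f))). Qed.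

Lemma op_cont (f : op) : exists M, 0 <= M /\ forall x y, nrm (f x - f y) <= M * nrm (x - y).
Proof.
case: (op_bnd f) => M [M0 hM]; exists M; split=> // x y.
by rewrite -opB.
Qed.

Definition mkop (f : H -> H) (hl : @lin _ H H f) (hb : @bnd _ H H f) := Op hl hb.

Lemma id_lin : @lin _ H H (fun x : H => x). Proof. by []. Qed.
Lemma id_bnd : @bnd _ H H (fun x : H => x).
Proof. by exists 1; split=> // x; rewrite mul1r. Qed.
Definition op_id := Op id_lin id_bnd.

Lemma comp_lin (f g : op) : @lin _ H H (fun x => f (g x)).
Proof. by move=> a x y; rewrite opD opZ opD opZ. Qed.
Lemma comp_bnd (f g : op) : @bnd _ H H (fun x => f (g x)).
Proof.
case: (op_bnd f) => M [M0 hM]; case: (op_bnd g) => N [N0 hN].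
exists (M * N); split; first exact: mulr_ge0.
move=> x; apply: le_trans (hM _) _; rewrite -mulrA; exact: ler_wpM2l.
Qed.
Definition op_comp f g := Op (comp_lin f g) (comp_bnd f g).

Lemma add_lin (f g : op) : @lin _ H H (fun x => f x + g x).
Proof.
move=> a x y; rewrite !opD !opZ scalerDr.
by rewrite -!addrA; congr (_ + _); rewrite addrCA.
Qed.
Lemma add_bnd (f g : op) : @bnd _ H H (fun x => f x + g x).
Proof.
case: (op_bnd f) => M [M0 hM]; case: (op_bnd g) => N [N0 hN].
exists (M + N); split; first exact: addr_ge0.
move=> x; apply: le_trans (nrmD _ _) _; rewrite mulrDl; exact: lerD.
Qed.
Definition op_add f g := Op (add_lin f g) (add_bnd f g).

Lemma scale_lin (c : R) (f : op) : @lin _ H H (fun x => (c%:C)%C *: f x).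
Proof. by move=> a x y; rewrite opD opZ scalerDr !scalerA mulrC. Qed.
Lemma scale_bnd (c : R) (f : op) : @bnd _ H H (fun x => (c%:C)%C *: f x).
Proof.
case: (op_bnd f) => M [M0 hM].
exists (`|c| * M); split; first exact: mulr_ge0.
move=> x; rewrite nrmR -mulrA; exact: ler_wpM2l.
Qed.
Definition op_scale c f := Op (scale_lin c f) (scale_bnd c f).

Lemma zero_lin : @lin _ H H (fun x : H => 0).
Proof. by move=> a x y; rewrite scaler0 addr0. Qed.
Lemma zero_bnd : @bnd _ H H (fun x : H => 0).
Proof. by exists 0; split=> // x; rewrite nrm0 mul0r. Qed.
Definition op_zero := Op zero_lin zero_bnd.

Definition op_sub f g := op_add f (op_scale (-1) g).

End Ops.
Section Real.
Variable R : realType.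

Lemma le0_eps (a : R) : (forall e, 0 < e -> a <= e) -> a <= 0.
Proof.
move=> h; apply/ler_addgt0Pr => e e0; rewrite add0r; exact: h.
Qed.

Lemma small_inv (e : R) : 0 < e -> exists N, forall n, (N <= n)%N -> (n.+1%:R)^-1 < e.
Proof.
move=> e0; exists (Num.Def.archi_bound (e^-1)) => n hn.
have h1 : e^-1 < (Num.Def.archi_bound e^-1)%:R by apply: archi_boundP; rewrite invr_ge0 ltW.
have h2 : (Num.Def.archi_bound e^-1)%:R <= (n.+1)%:R :> R by rewrite ler_nat; apply: leq_trans hn _.
rewrite -(invrK e) ltf_pV2 ?posrE ?ltr0Sn ?invr_gt0 //.
exact: lt_le_trans h1 h2.
Qed.

Lemma mono_le (w : nat -> R) : (forall n, w n <= w n.+1) -> forall m n, (m <= n)%N -> w m <= w n.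
Proof.
move=> h m n /subnK <-; elim: (n - m)%N => [|k ih]; first by rewrite add0n.
by apply: le_trans ih _; rewrite addSn.
Qed.

Lemma mono_cauchy (w : nat -> R) (B : R) :
  (forall n, w n <= w n.+1) -> (forall n, w n <= B) ->
  forall e, 0 < e -> exists N, forall m n, (N <= n)%N -> (n <= m)%N -> w m - w n < e.
Proof.
move=> hinc hB e e0.
pose E := (fun y : R => exists n, y = w n).
have ne : classical_sets.nonempty E by exists (w 0), 0%N.
have hub : classical_sets.has_ubound E by exists B => y [n ->].
have ub := ub_le_sup hub.
have : sup E - e < sup E by rewrite ltrBlDr ltrDl.
case/(sup_gt ne) => y [N ->] hN.
exists N => m n hn hm.
have h1 : w m <= sup E by apply: ub; exists m.
have h2 : w N <= w n by apply: mono_le.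
lra.
Qed.
End Real.

Section Limits.
Variable R : realType.
Variable H : Hilbert R.
Local Notation nrm := (@hnorm R H).

Definition hcvg (u : nat -> H) (l : H) :=
  forall e, 0 < e -> exists N, forall n, (N <= n)%N -> nrm (u n - l) < e.
Definition hcauchy (u : nat -> H) :=
  forall e, 0 < e -> exists N, forall m n, (N <= m)%N -> (N <= n)%N -> nrm (u m - u n) < e.

Lemma hcauchy_cvg u : hcauchy u -> exists l, hcvg u l.
Proof. move=> h; case: (hcomplete h) => l hl; by exists l. Qed.

Lemma hcvg_uniq u l1 l2 : hcvg u l1 -> hcvg u l2 -> l1 = l2.
Proof.
move=> h1 h2; apply/eqP; rewrite -subr_eq0; apply/eqP; apply: nrm_eq0.
apply/eqP; rewrite eq_le nrm_ge0 andbT.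
apply: le0_eps => e e0.
have e2 : 0 < e / 2 by rewrite divr_gt0.
case: (h1 _ e2) => N1 hN1; case: (h2 _ e2) => N2 hN2.
have a := hN1 (maxn N1 N2) (leq_maxl _ _).
have b := hN2 (maxn N1 N2) (leq_maxr _ _).
rewrite nrmB in a.
have := nrmB3 l1 (u (maxn N1 N2)) l2.
lra.
Qed.

Lemma hcvg_le u l (M : R) : hcvg u l -> (forall n, nrm (u n) <= M) -> nrm l <= M.
Proof.
move=> h hM; rewrite -subr_le0; apply: le0_eps => e e0.
case: (h _ e0) => N hN.
have a := hN N (leqnn N); rewrite nrmB in a.
have := nrmB3 l (u N) 0; rewrite !subr0 => c.
have := hM N; lra.
Qed.

Lemma hcvg_op (f : op H) u l : hcvg u l -> hcvg (fun n => f (u n)) (f l).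
Proof.
move=> h e e0; case: (op_cont f) => M [M0 hM].
have e1 : 0 < e / (M + 1) by rewrite divr_gt0 // ltr_wpDl.
case: (h _ e1) => N hN; exists N => n hn.
apply: le_lt_trans (hM _ _) _.
have := hN n hn => a.
have : M * nrm (u n - l) <= M * (e / (M + 1)) by apply: ler_wpM2l => //; exact: ltW.
have : M * (e / (M + 1)) < e.
  rewrite mulrA ltr_pdivrMr ?ltr_wpDl //; nra.
lra.
Qed.

Lemma hcvg_add u v l m : hcvg u l -> hcvg v m -> hcvg (fun n => u n + v n) (l + m).
Proof.
move=> h1 h2 e e0.
have e2 : 0 < e / 2 by rewrite divr_gt0.
case: (h1 _ e2) => N1 hN1; case: (h2 _ e2) => N2 hN2.
exists (maxn N1 N2) => n hn.
have a := hN1 n (leq_trans (leq_maxl _ _) hn).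
have b := hN2 n (leq_trans (leq_maxr _ _) hn).
have -> : u n + v n - (l + m) = (u n - l) + (v n - m) by rewrite opprD addrACA.
have := nrmD (u n - l) (v n - m); lra.
Qed.

Lemma hcvg_ext u v l : (forall n, u n = v n) -> hcvg u l -> hcvg v l.
Proof. by move=> e h eps eps0; case: (h _ eps0) => N hN; exists N => n hn; rewrite -e; exact: hN. Qed.

Lemma hcvg_shift u l : hcvg u l -> hcvg (fun n => u n.+1) l.
Proof.
move=> h e e0; case: (h _ e0) => N hN; exists N => n hn; apply: hN; exact: leqW.
Qed.

End Limits.
Section Riesz.
Variable R : realType.
Variable H : Hilbert R.
Local Notation ip := (@hinner R H).
Local Notation nrm := (@hnorm R H).
Local Notation RE := (@complex.Re R).
Implicit Types x y z : H.

Lemma quad0 (a b : R) : 0 <= b -> (forall t : R, 0 <= 2 * t * a + t ^+ 2 * b) -> a = 0.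
Proof.
move=> b0 h; have := h (- a / (b + 1)).
have b1 : 0 < b + 1 by lra.
have -> : 2 * (- a / (b + 1)) * a + (- a / (b + 1)) ^+ 2 * b
   = - (a ^+ 2 * (b + 2)) / (b + 1) ^+ 2.
  by field; lra.
rewrite pmulr_lge0 ?invr_gt0 ?exprn_gt0 // oppr_ge0 => h2.
have : 0 <= a ^+ 2 * (b + 2) by rewrite mulr_ge0 ?sqr_ge0 //; lra.
move=> h3; have h4 : a ^+ 2 * (b + 2) = 0 by apply/eqP; rewrite eq_le h2 h3.
move/eqP: h4; rewrite mulf_eq0 sqrf_eq0 => /orP [/eqP //|]; lra.
Qed.

Variable f : H -> R[i].
Hypothesis flin : forall a x y, f (a *: x + y) = a * f x + f y.
Variable M : R.
Hypothesis M0 : 0 <= M.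
Hypothesis fb : forall x, RE (f x) <= M * nrm x.

Lemma f0 : f 0 = 0.
Proof.
have := flin 1 0 0; rewrite scale1r addr0 mul1r => h.
by apply: (addrI (f 0)); rewrite addr0 -h.
Qed.
Lemma fD x y : f (x + y) = f x + f y.
Proof. by have := flin 1 x y; rewrite scale1r mul1r. Qed.
Lemma fZ a x : f (a *: x) = a * f x.
Proof. by have := flin a x 0; rewrite addr0 f0 addr0. Qed.
Lemma fN x : f (- x) = - f x.
Proof. by rewrite -scaleN1r fZ mulN1r. Qed.
Lemma fB x y : f (x - y) = f x - f y.
Proof. by rewrite fD fN. Qed.

Lemma fbN x : - (M * nrm x) <= RE (f x).
Proof. have := fb (- x); rewrite fN ReN nrmN; lra. Qed.

Lemma riesz : exists y, forall x, f x = ip x y.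
Proof.
case: (boolp.EM (forall x, f x = 0)) => [hz|hnz].
  by exists 0 => x; rewrite hz ip0r.
have [z fz] : exists z, 0 < RE (f z).
  have [w hw] : exists w, f w <> 0.
    by apply: boolp.contrapT => hc; apply: hnz => x; apply: boolp.contrapT => hx; apply: hc; exists x.
  have [hp|hn|h0] := ltrgtP (RE (f w)) 0.
  - by exists (- w); rewrite fN ReN oppr_gt0.
  - by exists w.
  have [hp|hn|h1] := ltrgtP (complex.Im (f w)) 0.
  - exists ('i%C *: w); rewrite fZ; move: hp; case: (f w) => a b /= hb; lra.
  - exists (- ('i%C *: w)); rewrite fN fZ; move: hn; case: (f w) => a b /= hb; lra.
  - by case: hw; apply: c_eq0.
pose E := (fun t : R => exists x, nrm x <= 1 /\ t = RE (f x)).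
have neE : classical_sets.nonempty E by exists 0, 0; rewrite nrm0 f0.
have hubE : classical_sets.has_ubound E.
  exists M => t [x [hx ->]]; apply: le_trans (fb x) _; rewrite -{2}(mulr1 M).
  exact: ler_wpM2l.
pose s := sup E.
have ubs : forall x, nrm x <= 1 -> RE (f x) <= s.
  by move=> x hx; apply: (ub_le_sup hubE); exists x.
have nz0 : 0 < nrm z + 1 by have := nrm_ge0 z; lra.
have s0 : 0 < s.
  apply: lt_le_trans (ubs (((nrm z + 1)^-1)%:C%C *: z) _).
    by rewrite fZ ReRM mulr_gt0 // invr_gt0.
  rewrite nrmR ger0_norm; last by rewrite invr_ge0 ltW.
  rewrite ler_pdivrMl // mulr1; lra.
have fs : forall x, RE (f x) <= s * nrm x.
  move=> x; have [nx0|nx0] := eqVneq (nrm x) 0.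
    by rewrite (nrm_eq0 nx0) f0 Re0 nrm0 mulr0.
  have nx : 0 < nrm x by rewrite lt_def nx0 nrm_ge0.
  have := ubs (((nrm x)^-1)%:C%C *: x).
  rewrite fZ ReRM nrmR ger0_norm; last by rewrite invr_ge0 ltW.
  rewrite mulVf // lexx => /(_ isT).
  by rewrite ler_pdivrMl // mulrC.
have hseq : forall n : nat, exists x, nrm x <= 1 /\ s - (n.+1%:R)^-1 < RE (f x).
  move=> n; have : s - (n.+1%:R)^-1 < s by rewrite ltrBlDr ltrDl invr_gt0 ltr0Sn.
  by case/(sup_gt neE) => t [x [hx ->]] ht; exists x.
case: (boolp.choice hseq) => xs hxs.
have par : forall x y, nrm (x - y) ^+ 2 = 2 * nrm x ^+ 2 + 2 * nrm y ^+ 2 - nrm (x + y) ^+ 2.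
  move=> x y; have h1 := nrm2_lin 1 x y; have h2 := nrm2_lin (-1) x y.
  rewrite scale1r in h1; rewrite RCN1 scaleN1r in h2; rewrite h1 h2; ring.
have cau : hcauchy xs.
  move=> e e0.
  have ee : 0 < e ^+ 2 * s / 8 by rewrite !mulr_gt0 ?exprn_gt0 ?invr_gt0.
  case: (small_inv ee) => N hN; exists N => m n hm hn.
  have hm1 := hN m hm; have hn1 := hN n hn.
  case: (hxs m) => bm lm; case: (hxs n) => bn ln.
  have hsum := fs (xs m + xs n); rewrite fD ReD in hsum.
  move: hm1 hn1 lm ln; set am := (m.+1%:R)^-1; set an := (n.+1%:R)^-1 => hm1 hn1 lm ln.
  have am0 : 0 <= am by rewrite /am invr_ge0.
  have an0 : 0 <= an by rewrite /an invr_ge0.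
  set d := am + an.
  have hd : d < e ^+ 2 * s / 4.
    rewrite /d; have -> : e ^+ 2 * s / 4 = 2 * (e ^+ 2 * s / 8) by field.
    lra.
  have hge : 2 * s - d <= s * nrm (xs m + xs n) by rewrite /d; lra.
  have pp := par (xs m) (xs n).
  have g1 := nrm_ge0 (xs m - xs n); have g2 := nrm_ge0 (xs m + xs n).
  have g3 := nrm_ge0 (xs m); have g4 := nrm_ge0 (xs n).
  have d0 : 0 <= d by rewrite /d addr_ge0.
  set dl := d / s.
  have hle : nrm (xs m + xs n) >= 2 - dl.
    rewrite -(ler_pM2l s0); have -> : s * (2 - dl) = 2 * s - d by rewrite /dl; field; exact: lt0r_neq0.
    exact: hge.
  have dl0 : 0 <= dl by rewrite /dl divr_ge0 // ltW.
  have e2 : 4 * dl < e ^+ 2.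
    rewrite /dl mulrA ltr_pdivrMr //.
    have : 4 * d < 4 * (e ^+ 2 * s / 4) by lra.
    have -> : 4 * (e ^+ 2 * s / 4) = e ^+ 2 * s by field.
    done.
  have key : nrm (xs m - xs n) ^+ 2 < e ^+ 2.
    case: (lerP 0 (2 - dl)) => hpos.
      have : (2 - dl) ^+ 2 <= nrm (xs m + xs n) ^+ 2 by rewrite ler_pXn2r // nnegrE.
      nra.
    nra.
  rewrite -(ltr_pXn2r (n:=2)) // ?nnegrE // ltW //.
have [x0 hx0] := hcauchy_cvg cau.
have nx0 : nrm x0 <= 1 by apply: (hcvg_le hx0) => n; case: (hxs n).
have fx0 : s <= RE (f x0).
  rewrite -subr_le0; apply: le0_eps => e e0.
  have M1 : 0 < M + 1 by move: M0; lra.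
  have e2 : 0 < e / 2 / (M + 1) by rewrite !divr_gt0.
  have e3 : 0 < e / 2 by rewrite divr_gt0.
  case: (hx0 _ e2) => N1 hN1.
  case: (small_inv e3) => N2 hN2; set n := maxn N1 N2.
  have a1 := hN1 n (leq_maxl _ _); have a2 := hN2 n (leq_maxr _ _).
  case: (hxs n) => _ a3.
  have a4 := fb (xs n - x0); rewrite fB ReB in a4.
  have a5 : M * nrm (xs n - x0) <= M * (e / 2 / (M + 1)) by apply: ler_wpM2l => //; exact: ltW.
  have a6 : M * (e / 2 / (M + 1)) <= e / 2.
    rewrite mulrA ler_pdivrMr //; nra.
  move: a2 a3; set q := (n.+1%:R)^-1 => a2 a3.
  rewrite nrmB in a1.
  lra.
have ortho : forall h, f h = 0 -> ip h x0 = 0.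
  have orthoRe : forall h, f h = 0 -> RE (ip x0 h) = 0.
    move=> h fh; apply: (@quad0 _ (nrm h ^+ 2)); first exact: sqr_ge0.
    move=> t; have := nrm2_lin t x0 h.
    have hf : RE (f (x0 + (t%:C)%C *: h)) = RE (f x0) by rewrite fD fZ fh mulr0 addr0.
    have := fs (x0 + (t%:C)%C *: h); rewrite hf => hh e.
    have g1 : 1 <= nrm (x0 + (t%:C)%C *: h).
      rewrite -(ler_pM2l s0) mulr1; lra.
    have g0 := nrm_ge0 x0.
    have g2 : nrm x0 ^+ 2 <= 1 by nra.
    have g3 : 1 <= nrm (x0 + (t%:C)%C *: h) ^+ 2 by nra.
    lra.
  move=> h fh.
  have a := orthoRe h fh.
  have b := orthoRe ('i%C *: h) (eq_trans (fZ _ _) (etrans (congr1 _ fh) (mulr0 _))).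
  rewrite ipZr ReiJ in b.
  by rewrite ipC (c_eq0 a b) rmorph0.
have fx00 : f x0 != 0 by apply/eqP => e; move: fx0; rewrite e Re0; lra.
have x00 : ip x0 x0 != 0.
  apply/eqP => e; move: fx00; rewrite (hinner_eq0 e) f0 eqxx //.
exists (Num.conj (f x0 / ip x0 x0) *: x0) => x.
rewrite ipZr conjCK.
have := ortho (x - (f x / f x0) *: x0).
rewrite fB fZ mulfVK // subrr => /(_ erefl).
rewrite ipBl ipZl => /eqP; rewrite subr_eq0 => /eqP ->.
by field; rewrite fx00 x00.
Qed.

End Riesz.
Section Adjoint.
Variable R : realType.
Variable H : Hilbert R.
Local Notation ip := (@hinner R H).
Local Notation nrm := (@hnorm R H).
Local Notation RE := (@complex.Re R).

Lemma adjoint_ex (T : op H) : exists A : op H, forall x y, ip (T x) y = ip x (A y).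
Proof.
case: (op_bnd T) => M [M0 hM].
have hr : forall y : H, exists z : H, forall x, ip (T x) y = ip x z.
  move=> y; apply: (@riesz R H (fun x => ip (T x) y) _ (M * nrm y)).
  - by move=> a x x'; rewrite opD opZ ipDl ipZl.
  - by rewrite mulr_ge0 ?nrm_ge0.
  - move=> x; apply: le_trans (CS _ _) _.
    rewrite mulrAC; apply: ler_wpM2r; [exact: nrm_ge0| exact: hM].
case: (boolp.choice hr) => A hA.
have Alin : @lin _ H H A.
  move=> a y y'; apply: ext_r => x.
  by rewrite -hA !ipDr !ipZr -!hA.
have Abnd : @bnd _ H H A.
  exists M; split=> // y.
  have e : nrm (A y) ^+ 2 <= M * nrm (A y) * nrm y.
    rewrite nrm2 -hA; apply: le_trans (CS _ _) _.
    apply: ler_wpM2r; [exact: nrm_ge0|exact: hM].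
  have g1 := nrm_ge0 (A y); have g2 := nrm_ge0 y.
  have [z|nz] := eqVneq (nrm (A y)) 0.
    by rewrite z mulr_ge0.
  have p : 0 < nrm (A y) by rewrite lt_def nz g1.
  rewrite -(ler_pM2l p); nra.
by exists (Op Alin Abnd).
Qed.
End Adjoint.
Section CScale.
Variable R : realType.
Variable H : Hilbert R.
Local Notation ip := (@hinner R H).
Local Notation nrm := (@hnorm R H).
Local Notation RE := (@complex.Re R).

Lemma nrm_i (x : H) : nrm ('i%C *: x) = nrm x.
Proof.
rewrite /hnorm ipZl ipZr mulrA.
have -> : 'i%C * Num.conj 'i%C = 1 :> R[i] by apply/eqP; rewrite eq_complex /=; apply/andP; split; apply/eqP; ring.
by rewrite mul1r.
Qed.

Lemma nrmZ_le (a : R[i]) (x : H) : nrm (a *: x) <= (`|complex.Re a| + `|complex.Im a|) * nrm x.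
Proof.
have -> : a *: x = ((complex.Re a)%:C)%C *: x + ((complex.Im a)%:C)%C *: ('i%C *: x).
  rewrite scalerA -scalerDl; congr (_ *: _).
  by case: a => p q; apply/eqP; rewrite eq_complex /=; apply/andP; split; apply/eqP; ring.
apply: le_trans (nrmD _ _) _; rewrite !nrmR nrm_i mulrDl //.
Qed.

Lemma cscale_lin (a : R[i]) (f : op H) : @lin _ H H (fun x => a *: f x).
Proof. by move=> b x y; rewrite opD opZ scalerDr !scalerA mulrC. Qed.
Lemma cscale_bnd (a : R[i]) (f : op H) : @bnd _ H H (fun x => a *: f x).
Proof.
case: (op_bnd f) => M [M0 hM].
exists ((`|complex.Re a| + `|complex.Im a|) * M); split; first by rewrite mulr_ge0 ?addr_ge0.
move=> x; apply: le_trans (nrmZ_le _ _) _; rewrite -mulrA; apply: ler_wpM2l => //.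
by rewrite addr_ge0.
Qed.
Definition op_cscale a f := Op (cscale_lin a f) (cscale_bnd a f).
End CScale.

Section LimIp.
Variable R : realType.
Variable H : Hilbert R.
Local Notation ip := (@hinner R H).
Local Notation nrm := (@hnorm R H).
Local Notation RE := (@complex.Re R).

Lemma lim_ip_Re (x y : H) u v l m : hcvg u l -> hcvg v m ->
  (forall n, RE (ip (u n) y) = RE (ip x (v n))) -> RE (ip l y) = RE (ip x m).
Proof.
move=> hu hv he.
suff key : forall e, 0 < e -> `|RE (ip l y) - RE (ip x m)| <= e.
  apply/eqP; rewrite -subr_eq0 -normr_le0; apply: le0_eps; exact: key.
move=> e e0.
have gy := nrm_ge0 y; have gx := nrm_ge0 x.
have e1 : 0 < e / 2 / (nrm y + 1) by rewrite !divr_gt0 // ltr_wpDl.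
have e2 : 0 < e / 2 / (nrm x + 1) by rewrite !divr_gt0 // ltr_wpDl.
case: (hu _ e1) => N1 h1; case: (hv _ e2) => N2 h2.
set n := maxn N1 N2.
have a1 := h1 n (leq_maxl _ _); have a2 := h2 n (leq_maxr _ _).
have d : RE (ip l y) - RE (ip x m) = RE (ip (l - u n) y) + RE (ip x (v n - m)).
  by rewrite ipBl ipBr !ReB he; ring.
rewrite d.
have c1 := CS (l - u n) y; have c2 := CSN (l - u n) y.
have c3 := CS x (v n - m); have c4 := CSN x (v n - m).
rewrite nrmB in a1.
have b1 : nrm (l - u n) * nrm y <= e / 2.
  have : nrm (l - u n) * nrm y <= e / 2 / (nrm y + 1) * nrm y by apply: ler_wpM2r => //; exact: ltW.
  have : e / 2 / (nrm y + 1) * nrm y <= e / 2.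
    rewrite mulrAC ler_pdivrMr ?ltr_wpDl //. have : 0 < e / 2 by rewrite divr_gt0. nra.
  lra.
have b2 : nrm x * nrm (v n - m) <= e / 2.
  have : nrm x * nrm (v n - m) <= nrm x * (e / 2 / (nrm x + 1)) by apply: ler_wpM2l => //; exact: ltW.
  have : nrm x * (e / 2 / (nrm x + 1)) <= e / 2.
    rewrite mulrA ler_pdivrMr ?ltr_wpDl //. have : 0 < e / 2 by rewrite divr_gt0. nra.
  lra.
rewrite ler_norml; apply/andP; split; lra.
Qed.

Lemma lim_ip (x y : H) u v l m : hcvg u l -> hcvg v m ->
  (forall n, ip (u n) y = ip x (v n)) -> ip l y = ip x m.
Proof.
move=> hu hv he; apply/eqP; rewrite -subr_eq0; apply/eqP; apply: c_eq0.
  by rewrite ReB (lim_ip_Re (x:=x) (y:=y) hu hv) ?subrr // => n; rewrite he.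
have hv' : hcvg (fun n => 'i%C *: v n) ('i%C *: m).
  exact: (hcvg_op (op_cscale 'i%C (op_id H)) hv).
have := lim_ip_Re (y := 'i%C *: y) hu hv' (fun n => congr1 _ (etrans (ipZr _ _ _) (etrans (congr1 _ (he n)) (esym (ipZr _ _ _))))).
by rewrite !ipZr !ReiJ ImB => ->; rewrite subrr.
Qed.
End LimIp.

Section Sqrt.
Variable R : realType.
Variable H : Hilbert R.
Local Notation ip := (@hinner R H).
Local Notation nrm := (@hnorm R H).
Local Notation RE := (@complex.Re R).

Variable B : op H.
Hypothesis Bc : forall x, nrm (B x) <= nrm x.
Hypothesis Bsa : forall x y, ip (B x) y = ip x (B y).
Variable C : op H.
Hypothesis BC : forall x, C (B x) = B (C x).

Local Notation half := (((2 : R)^-1)%:C)%C.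

Fixpoint Wn (n : nat) : op H :=
  match n with
  | 0 => op_zero H
  | k.+1 => op_scale (2^-1) (op_add B (op_comp (Wn k) (Wn k)))
  end.
Fixpoint w (n : nat) : R :=
  match n with
  | 0 => 0
  | k.+1 => (1 + w k ^+ 2) / 2
  end.

Lemma WnS n x : Wn n.+1 x = half *: (B x + Wn n (Wn n x)).
Proof. by []. Qed.
Lemma Wn0 x : Wn 0 x = 0. Proof. by []. Qed.

Lemma w_bounds n : 0 <= w n <= 1.
Proof.
elim: n => [|n /andP [h1 h2]] /=; first by rewrite lexx ler01.
apply/andP; split; nra.
Qed.
Lemma w_inc n : w n <= w n.+1.
Proof. have /andP [h1 h2] := w_bounds n; rewrite /=; nra. Qed.

Lemma half_nrm (y : H) : nrm (half *: y) = 2^-1 * nrm y.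
Proof. by rewrite nrmR ger0_norm // invr_ge0. Qed.

Lemma Wn_bnd n x : nrm (Wn n x) <= w n * nrm x.
Proof.
elim: n x => [|n ih] x; first by rewrite Wn0 nrm0 mul0r.
rewrite WnS half_nrm /=.
have h1 := Bc x; have h2 := ih (Wn n x); have h3 := ih x.
have /andP [w0 w1] := w_bounds n.
have h4 : w n * nrm (Wn n x) <= w n * (w n * nrm x) by apply: ler_wpM2l.
have h5 := nrmD (B x) (Wn n (Wn n x)).
have h6 := nrm_ge0 x.
have e : (1 + w n ^+ 2) / 2 * nrm x = 2^-1 * (nrm x + w n * (w n * nrm x)) by ring.
rewrite e; apply: ler_wpM2l; first by rewrite invr_ge0.
lra.
Qed.

Lemma Wn_diff n x : nrm (Wn n.+1 x - Wn n x) <= (w n.+1 - w n) * nrm x.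
Proof.
elim: n x => [|n ih] x.
  rewrite !Wn0 subr0 WnS !Wn0 addr0 half_nrm.
  have -> : w 1 - w 0 = 2^-1 by rewrite /=; ring.
  by apply: ler_wpM2l; [rewrite invr_ge0|exact: Bc].
have -> : Wn n.+2 x - Wn n.+1 x =
   half *: (Wn n.+1 (Wn n.+1 x - Wn n x) + (Wn n.+1 (Wn n x) - Wn n (Wn n x))).
  rewrite (WnS n.+1 x) opB.
  set a := Wn n.+1 (Wn n.+1 x); set b := Wn n.+1 (Wn n x); set c := Wn n (Wn n x).
  rewrite (WnS n x) -/c -scalerBr; congr (_ *: _).
  by rewrite addrA subrK opprD addrACA subrr add0r.
rewrite half_nrm.
have /andP [w0 w1] := w_bounds n; have /andP [w0' w1'] := w_bounds n.+1.
have i1 := Wn_bnd n.+1 (Wn n.+1 x - Wn n x).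
have i2 := ih x.
have i3 := ih (Wn n x).
have i4 := Wn_bnd n x.
have i5 := nrmD (Wn n.+1 (Wn n.+1 x - Wn n x)) (Wn n.+1 (Wn n x) - Wn n (Wn n x)).
have g := nrm_ge0 x; have d0 := w_inc n.
have j1 : w n.+1 * nrm (Wn n.+1 x - Wn n x) <= w n.+1 * ((w n.+1 - w n) * nrm x)
  by apply: ler_wpM2l.
have j2 : (w n.+1 - w n) * nrm (Wn n x) <= (w n.+1 - w n) * (w n * nrm x)
  by apply: ler_wpM2l; lra.
have e : (w n.+2 - w n.+1) = 2^-1 * (w n.+1 * (w n.+1 - w n) + (w n.+1 - w n) * w n).
  rewrite [w n.+2]/= [w n.+1 in X in X = _]/=; set q := w n.+1.
  rewrite /q /=; ring.
rewrite e -mulrA; apply: ler_wpM2l; first by rewrite invr_ge0.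
nra.
Qed.

Lemma Wn_cau n m x : (n <= m)%N -> nrm (Wn m x - Wn n x) <= (w m - w n) * nrm x.
Proof.
move/subnK <-; elim: (m - n)%N => [|k ih]; first by rewrite add0n !subrr nrm0 mul0r.
rewrite addSn.
have := nrmB3 (Wn (k + n).+1 x) (Wn (k + n) x) (Wn n x).
have := Wn_diff (k + n) x; lra.
Qed.

Lemma Wn_sa n x y : ip (Wn n x) y = ip x (Wn n y).
Proof.
elim: n x y => [|n ih] x y; first by rewrite !Wn0 ip0l ip0r.
by rewrite !WnS ipZl ipRr ipDl ipDr Bsa ih ih.
Qed.

Lemma Wn_C n x : C (Wn n x) = Wn n (C x).
Proof.
elim: n x => [|n ih] x; first by rewrite !Wn0 op0.
by rewrite !WnS opZ opD BC ih ih.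
Qed.

Lemma Wn_cauchy x : hcauchy (fun n => Wn n x).
Proof.
move=> e e0.
have e1 : 0 < e / (nrm x + 1) by rewrite divr_gt0 // ltr_wpDl ?nrm_ge0.
have [N hN] := mono_cauchy w_inc (fun n => proj2 (andP (w_bounds n))) e1.
have g := nrm_ge0 x.
have key : forall m n, (N <= n)%N -> (n <= m)%N -> nrm (Wn m x - Wn n x) < e.
  move=> m n hn hm; apply: le_lt_trans (Wn_cau x hm) _.
  have := hN m n hn hm => h.
  have p : 0 <= w m - w n by rewrite subr_ge0; apply: mono_le w_inc _ _ hm.
  have : (w m - w n) * nrm x <= (w m - w n) * (nrm x + 1) by apply: ler_wpM2l => //; lra.
  have : (w m - w n) * (nrm x + 1) < e.
    by rewrite -ltr_pdivlMr // ltr_wpDl.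
  lra.
exists N => m n hm hn.
case: (leqP n m) => h; first exact: key.
rewrite nrmB; apply: key => //; exact: ltnW.
Qed.

Lemma sqrt_ex : exists W : op H,
  [/\ forall x, W (W x) = (2%:R : R[i]) *: W x - B x,
      forall x y, ip (W x) y = ip x (W y) &
      forall x, C (W x) = W (C x)].
Proof.
have hl : forall x, exists l, hcvg (fun n => Wn n x) l.
  move=> x; exact: hcauchy_cvg (Wn_cauchy x).
case: (boolp.choice hl) => W hW.
have Wlin : @lin _ H H W.
  move=> a x y; eapply hcvg_uniq; first exact: (hW (a *: x + y)).
  apply: (hcvg_ext (u := fun n => a *: Wn n x + Wn n y)); first by move=> n; rewrite opD opZ.
  apply: hcvg_add; last exact: hW.
  exact: (hcvg_op (op_cscale a (op_id H)) (hW x)).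
have Wbnd : @bnd _ H H W.
  exists 1; split=> // x; rewrite mul1r; apply: (hcvg_le (hW x)) => n.
  apply: le_trans (Wn_bnd n x) _; have /andP [_ h] := w_bounds n.
  by rewrite -{2}(mul1r (nrm x)); apply: ler_wpM2r => //; exact: nrm_ge0.
pose Wo := Op Wlin Wbnd.
exists Wo; split.
- move=> x; rewrite /Wo /=.
  have h1 : hcvg (fun n => Wn n.+1 x) (W x) := hcvg_shift (hW x).
  have h2 : hcvg (fun n => Wn n.+1 x) (half *: (B x + W (W x))).
    apply: (hcvg_ext (u := fun n => half *: (B x + Wn n (Wn n x)))) => //.
    apply: (hcvg_op (op_cscale half (op_id H)) (u := fun n => B x + Wn n (Wn n x))).
    apply: (hcvg_add (u := fun _ => B x)); first by move=> e e0; exists 0%N => n _; rewrite subrr nrm0.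
    move=> e e0.
    have e2 : 0 < e / 2 by rewrite divr_gt0.
    case: (hW x _ e2) => N1 hN1; case: (hW (W x) _ e2) => N2 hN2.
    exists (maxn N1 N2) => n hn.
    have a1 := hN1 n (leq_trans (leq_maxl _ _) hn).
    have a2 := hN2 n (leq_trans (leq_maxr _ _) hn).
    have a3 := Wn_bnd n (Wn n x - W x).
    have /andP [_ w1] := w_bounds n.
    have a4 : w n * nrm (Wn n x - W x) <= nrm (Wn n x - W x).
      by rewrite -{2}(mul1r (nrm (Wn n x - W x))); apply: ler_wpM2r => //; exact: nrm_ge0.
    have := nrmB3 (Wn n (Wn n x)) (Wn n (W x)) (W (W x)).
    rewrite -opB; lra.
  have e := hcvg_uniq h1 h2.
  have two_half : (2%:R : R[i]) * half = 1.
    by apply/eqP; rewrite eq_complex /=; apply/andP; split; apply/eqP; field.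
  have e2 : (2%:R : R[i]) *: W x = B x + W (W x) by rewrite {1}e scalerA two_half scale1r.
  by rewrite e2 addrC addKr.
- move=> x y; rewrite /Wo /=.
  exact: (lim_ip (hW x) (hW y) (fun n => Wn_sa n x y)).
- move=> x; rewrite /Wo /=.
  apply: (hcvg_uniq (hcvg_op C (hW x))).
  exact: (hcvg_ext (u := fun n => Wn n (C x)) (fun n => esym (Wn_C n x)) (hW (C x))).
Qed.
End Sqrt.
Section Prod.
Variable R : realType.
Variable H : Hilbert R.
Local Notation ip := (@hinner R H).
Local Notation nrm := (@hnorm R H).
Local Notation RE := (@complex.Re R).

Definition pip (u v : (H * H)%type) : R[i] := ip u.1 v.1 + ip u.2 v.2.

Lemma pDl (a : R[i]) (u v w : (H * H)%type) : pip (a *: u + v) w = a * pip u w + pip v w.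
Proof. rewrite /pip /= !hinnerDl; ring. Qed.
Lemma pC (u v : (H * H)%type) : pip v u = Num.conj (pip u v).
Proof. by rewrite /pip rmorphD /= -!hinnerC. Qed.
Lemma pge0 (u : (H * H)%type) : 0 <= pip u u.
Proof. by rewrite /pip addr_ge0 ?hinner_ge0. Qed.
Lemma peq0 (u : (H * H)%type) : pip u u = 0 -> u = 0.
Proof.
case: u => a b; rewrite /pip /= => /eqP; rewrite paddr_eq0 ?hinner_ge0 //.
by case/andP => /eqP /hinner_eq0 -> /eqP /hinner_eq0 ->.
Qed.

Lemma pRe (u : (H * H)%type) : RE (pip u u) = nrm u.1 ^+ 2 + nrm u.2 ^+ 2.
Proof. by rewrite /pip ReD !nrm2. Qed.

Lemma sq_le1 (a b : R) : 0 <= a -> 0 <= b -> a <= Num.sqrt (a ^+ 2 + b ^+ 2).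
Proof.
move=> a0 b0; rewrite -{1}(ger0_norm a0) -sqrtr_sqr ler_sqrt ?addr_ge0 ?sqr_ge0 //.
by rewrite lerDl sqr_ge0.
Qed.
Lemma sq_leD (a b : R) : 0 <= a -> 0 <= b -> Num.sqrt (a ^+ 2 + b ^+ 2) <= a + b.
Proof.
move=> a0 b0; rewrite -(ger0_norm (addr_ge0 a0 b0)) -sqrtr_sqr ler_sqrt ?sqr_ge0 //.
nra.
Qed.

Lemma pcomplete (u : nat -> (H * H)%type) :
  (forall e : R, 0 < e -> exists N : nat, forall m n : nat,
     (N <= m)%N -> (N <= n)%N -> Num.sqrt (RE (pip (u m - u n) (u m - u n))) < e) ->
  exists l : (H * H)%type, forall e : R, 0 < e -> exists N : nat, forall n : nat,
     (N <= n)%N -> Num.sqrt (RE (pip (u n - l) (u n - l))) < e.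
Proof.
move=> hc.
have c1 : hcauchy (fun n => (u n).1).
  move=> e e0; case: (hc e e0) => N hN; exists N => m n hm hn.
  apply: le_lt_trans (hN m n hm hn); rewrite pRe.
  rewrite -[(u m).1 - (u n).1]/((u m - u n).1).
  exact: sq_le1 (nrm_ge0 _) (nrm_ge0 _).
have c2 : hcauchy (fun n => (u n).2).
  move=> e e0; case: (hc e e0) => N hN; exists N => m n hm hn.
  apply: le_lt_trans (hN m n hm hn); rewrite pRe [nrm _ ^+ 2 + _]addrC.
  rewrite -[(u m).2 - (u n).2]/((u m - u n).2).
  exact: sq_le1 (nrm_ge0 _) (nrm_ge0 _).
case: (hcauchy_cvg c1) => l1 h1; case: (hcauchy_cvg c2) => l2 h2.
exists (l1, l2) => e e0.
have e2 : 0 < e / 2 by rewrite divr_gt0.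
case: (h1 _ e2) => N1 hN1; case: (h2 _ e2) => N2 hN2.
exists (maxn N1 N2) => n hn.
have a1 := hN1 n (leq_trans (leq_maxl _ _) hn).
have a2 := hN2 n (leq_trans (leq_maxr _ _) hn).
rewrite pRe; apply: le_lt_trans (sq_leD (nrm_ge0 _) (nrm_ge0 _)) _.
rewrite -[(u n - (l1, l2)).1]/((u n).1 - l1) -[(u n - (l1, l2)).2]/((u n).2 - l2).
lra.
Qed.

Definition KH : Hilbert R := @Hilbert_ R ((H * H)%type : lmodType R[i]) pip pDl pC pge0 peq0 pcomplete.

Lemma Kip (u v : KH) : hinner u v = ip u.1 v.1 + ip u.2 v.2.
Proof. by []. Qed.
Lemma Knrm2 (u : KH) : hnorm u ^+ 2 = nrm u.1 ^+ 2 + nrm u.2 ^+ 2.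
Proof. by rewrite nrm2 Kip ReD !nrm2. Qed.
Lemma Knrm_def (u : KH) : hnorm u = Num.sqrt (nrm u.1 ^+ 2 + nrm u.2 ^+ 2).
Proof. by rewrite /hnorm -pRe. Qed.
Lemma Knrm1 (u : KH) : nrm u.1 <= hnorm u.
Proof. rewrite Knrm_def; exact: sq_le1 (nrm_ge0 _) (nrm_ge0 _). Qed.
Lemma Knrm2' (u : KH) : nrm u.2 <= hnorm u.
Proof. rewrite Knrm_def addrC; exact: sq_le1 (nrm_ge0 _) (nrm_ge0 _). Qed.
Lemma KnrmD (u : KH) : hnorm u <= nrm u.1 + nrm u.2.
Proof. rewrite Knrm_def; exact: sq_leD (nrm_ge0 _) (nrm_ge0 _). Qed.

Section Blk.
Variables A B C D : op H.
Definition blkf (u : KH) : KH := ((A u.1 + B u.2, C u.1 + D u.2) : (H * H)%type).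
Lemma blk_lin : @lin _ KH KH blkf.
Proof.
move=> a u v; rewrite /blkf /=; congr (_, _) => /=;
  rewrite !opD !opZ scalerDr -!addrA; congr (_ + _); rewrite addrCA //.
Qed.
Lemma blk_bnd : @bnd _ KH KH blkf.
Proof.
case: (op_bnd A) => Ma [Ma0 hA]; case: (op_bnd B) => Mb [Mb0 hB].
case: (op_bnd C) => Mc [Mc0 hC]; case: (op_bnd D) => Md [Md0 hD].
exists (Ma + Mb + Mc + Md); split; first by rewrite !addr_ge0.
move=> u; apply: le_trans (KnrmD _) _; rewrite /blkf /=.
have i1 := nrmD (A u.1) (B u.2); have i2 := nrmD (C u.1) (D u.2).
have j1 := hA u.1; have j2 := hB u.2; have j3 := hC u.1; have j4 := hD u.2.
have k1 := Knrm1 u; have k2 := Knrm2' u.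
have l1 : Ma * nrm u.1 <= Ma * hnorm u by apply: ler_wpM2l.
have l2 : Mb * nrm u.2 <= Mb * hnorm u by apply: ler_wpM2l.
have l3 : Mc * nrm u.1 <= Mc * hnorm u by apply: ler_wpM2l.
have l4 : Md * nrm u.2 <= Md * hnorm u by apply: ler_wpM2l.
lra.
Qed.
Definition blk : op KH := Op blk_lin blk_bnd.
Lemma blkE u : blk u = ((A u.1 + B u.2, C u.1 + D u.2) : (H * H)%type).
Proof. by []. Qed.
End Blk.
End Prod.
Section Polar.
Variable R : realType.
Variable H : Hilbert R.
Local Notation ip := (@hinner R H).
Local Notation nrm := (@hnorm R H).
Local Notation RE := (@complex.Re R).

Lemma parallelogram (x y : H) : nrm (x + y) ^+ 2 + nrm (x - y) ^+ 2 = 2 * nrm x ^+ 2 + 2 * nrm y ^+ 2.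
Proof.
have h1 := nrm2_lin 1 x y; have h2 := nrm2_lin (-1) x y.
rewrite scale1r in h1; rewrite RCN1 scaleN1r in h2; rewrite h1 h2; ring.
Qed.

Lemma polar (Q : op H) : (forall x y, ip (Q x) y = ip x (Q y)) ->
  (forall z, `|RE (ip (Q z) z)| <= nrm z ^+ 2) -> forall x, nrm (Q x) <= nrm x.
Proof.
move=> sa hb x; set y := Q x.
have e : RE (ip (Q (x + y)) (x + y)) - RE (ip (Q (x - y)) (x - y)) = 4 * RE (ip (Q x) y).
  rewrite !(opD, opN) !(ipDl, ipNl, ipDr, ipNr) !(ReD, ReN).
  have -> : RE (ip (Q y) x) = RE (ip (Q x) y) by rewrite sa Re_ipC.
  ring.
have b1 := hb (x + y); have b2 := hb (x - y).
have p := parallelogram x y.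
rewrite -/y -nrm2 in e.
have g1 := nrm_ge0 x; have g2 := nrm_ge0 y.
have : nrm y ^+ 2 <= nrm x ^+ 2.
  move: b1 b2; rewrite !ler_norml => /andP [b1 b1'] /andP [b2 b2'].
  lra.
move=> h; rewrite -(ler_pXn2r (n:=2)) // ?nnegrE //.
Qed.
End Polar.

Lemma ReNZ (R : realType) (z : R[i]) : complex.Re z != 0 -> z != 0.
Proof. by apply: contra => /eqP ->. Qed.
Section Fwd1.
Variable R : realType.
Variable r : R.
Hypothesis r0 : 0 < r.
Hypothesis r1 : r < 1.
Variable H : Hilbert R.
Local Notation ip := (@hinner R H).
Local Notation nrm := (@hnorm R H).
Local Notation RE := (@complex.Re R).
Variables T S0 A Sis : op H.
Hypothesis TS : forall x, T (S0 x) = x.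
Hypothesis ST : forall x, S0 (T x) = x.
Hypothesis Tc : forall x, nrm (T x) <= nrm x.
Hypothesis Sc : forall x, r * nrm (S0 x) <= nrm x.
Hypothesis adjT : forall x y, ip (T x) y = ip x (A y).
Hypothesis adjS : forall x y, ip (S0 x) y = ip x (Sis y).

Lemma AS x : A (Sis x) = x.
Proof. by apply: ext_r => z; rewrite -adjT -adjS ST. Qed.
Lemma SA x : Sis (A x) = x.
Proof. by apply: ext_r => z; rewrite -adjS -adjT TS. Qed.
Lemma Ssa x y : ip (A (T x)) y = ip x (A (T y)).
Proof. by rewrite -adjT ipC -adjT -ipC. Qed.
Lemma S_re x : RE (ip (A (T x)) x) = nrm (T x) ^+ 2.
Proof. by rewrite Re_ipC -adjT nrm2. Qed.
Lemma S_bounds x : r ^+ 2 * nrm x ^+ 2 <= RE (ip (A (T x)) x) <= nrm x ^+ 2.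
Proof.
rewrite S_re; have h1 := Tc x; have h2 := Sc (T x); rewrite ST in h2.
have g1 := nrm_ge0 x; have g2 := nrm_ge0 (T x).
have h3 : 0 <= r * nrm x by rewrite mulr_ge0 // ltW.
have k1 := ler_pM h3 h3 h2 h2.
have k2 := ler_pM g2 g2 h1 h1.
rewrite !expr2; apply/andP; split; nra.
Qed.

Definition cc := (1 + r ^+ 2) / 2.
Definition dd := (1 - r ^+ 2) / 2.
Lemma dd0 : 0 < dd. Proof. rewrite /dd; have := r0; have := r1; nra. Qed.

Definition Sp := op_scale (dd^-1) (op_add (op_comp A T) (op_scale (- cc) (op_id H))).
Lemma SpE x : Sp x = ((dd^-1)%:C)%C *: (A (T x) + ((- cc)%:C)%C *: x).
Proof. by []. Qed.

Lemma Sp_sa x y : ip (Sp x) y = ip x (Sp y).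
Proof. by rewrite !SpE ipZl ipRr ipDl ipDr ipZl ipRr Ssa. Qed.

Lemma Sp_c x : nrm (Sp x) <= nrm x.
Proof.
apply: polar; first exact: Sp_sa.
move=> z; rewrite SpE ipZl ReRM ipDl ipZl ReD ReRM.
have /andP [b1 b2] := S_bounds z.
set s := RE (ip (A (T z)) z); rewrite -nrm2; set n := nrm z ^+ 2.
move: b1 b2; rewrite -/s -/n => b1 b2.
have d0 := dd0.
have q : 0 < 1 - r ^+ 2 by have := r0; have := r1; nra.
have e : dd^-1 * (s + - cc * n) = (2 * s - (1 + r ^+ 2) * n) / (1 - r ^+ 2).
  by rewrite /dd /cc; field; rewrite lt0r_neq0.
rewrite e ler_norml ler_pdivrMr // ler_pdivlMr //.
apply/andP; split; nra.
Qed.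

Definition Bop := op_comp Sp Sp.
Lemma B_c x : nrm (Bop x) <= nrm x.
Proof. exact: le_trans (Sp_c _) (Sp_c _). Qed.
Lemma B_sa x y : ip (Bop x) y = ip x (Bop y).
Proof. by rewrite /= !Sp_sa. Qed.
Definition Cop := op_comp A T.
Lemma S_Sp x : A (T (Sp x)) = Sp (A (T x)).
Proof. by rewrite !SpE !(opZ, opD). Qed.
Lemma B_C x : Cop (Bop x) = Bop (Cop x).
Proof. change (A (T (Sp (Sp x))) = Sp (Sp (A (T x)))); by rewrite !S_Sp. Qed.

Lemma R0_ex : exists R0 : op H,
  [/\ forall x y, ip (R0 x) y = ip x (R0 y),
      forall x, R0 (A (T x)) = A (T (R0 x)) &
      forall x, R0 (R0 x) = A (T x) - A (T (A (T x))) - ((r ^+ 2)%:C)%C *: x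
                             + ((r ^+ 2)%:C)%C *: A (T x)].
Proof.
have [W [hW Wsa WC]] := sqrt_ex B_c B_sa B_C.
pose R0 := op_scale dd (op_add (op_id H) (op_scale (-1) W)).
have R0E : forall x, R0 x = ((dd)%:C)%C *: (x + ((-1)%:C)%C *: W x) by [].
exists R0; split.
- by move=> x y; rewrite !R0E ipZl ipRr ipDl ipDr ipZl ipRr Wsa.
- move=> x; rewrite !R0E !(opZ, opD).
  by have := WC x; rewrite /Cop /= => ->.
- move=> x; rewrite !R0E !(opZ, opD) hW /= !(opZ, opD).
  apply: ext_l => z; rewrite !(ipDl, ipZl, ipNl, ipBl).
  have d0 := dd0.
  rewrite /dd /cc; field.
  apply: ReNZ => /=; apply/eqP => e; move: e; have := r0; have := r1; nra.
Qed.
End Fwd1.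
Section Fwd2.
Variable R : realType.
Variable r : R.
Hypothesis r0 : 0 < r.
Hypothesis r1 : r < 1.
Variable H : Hilbert R.
Local Notation ip := (@hinner R H).
Local Notation nrm := (@hnorm R H).
Local Notation RE := (@complex.Re R).
Variables T S0 A Sis R0 : op H.
Hypothesis TS : forall x, T (S0 x) = x.
Hypothesis ST : forall x, S0 (T x) = x.
Hypothesis adjT : forall x y, ip (T x) y = ip x (A y).
Hypothesis adjS : forall x y, ip (S0 x) y = ip x (Sis y).
Hypothesis AS : forall x, A (Sis x) = x.
Hypothesis SA : forall x, Sis (A x) = x.
Hypothesis R0sa : forall x y, ip (R0 x) y = ip x (R0 y).
Hypothesis R0C : forall x, R0 (A (T x)) = A (T (R0 x)).
Hypothesis R0sq : forall x, R0 (R0 x) = A (T x) - A (T (A (T x))) - ((r ^+ 2)%:C)%C *: x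
                             + ((r ^+ 2)%:C)%C *: A (T x).

Lemma rnz : (r%:C)%C != 0 :> R[i].
Proof. apply: ReNZ => /=; rewrite lt0r_neq0 //. Qed.

Lemma adjSis x y : ip (Sis x) y = ip x (S0 y).
Proof. by rewrite ipC -adjS -ipC. Qed.
Lemma Ssa' x y : ip (A (T x)) y = ip x (A (T y)).
Proof. by rewrite -adjT ipC -adjT -ipC. Qed.

Definition kk := (1 - r ^+ 2)^-1.
Definition Sop := op_comp A T.
Definition Jop : op (KH H) := blk T (op_comp Sis R0) (op_zero H) (op_scale r Sis).
Definition Jiop : op (KH H) := blk S0 (op_scale (- r^-1) (op_comp S0 (op_comp Sis (op_comp R0 A))))
   (op_zero H) (op_scale (r^-1) A).
Definition Jsop : op (KH H) := blk A (op_zero H) (op_comp R0 S0) (op_scale r S0).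
Definition Pa := op_scale kk (op_add Sop (op_scale (- r ^+ 2) (op_id H))).
Definition Pb := op_scale kk (op_add (op_id H) (op_scale (-1) Sop)).
Definition P0op : op (KH H) := blk Pa (op_scale kk R0) (op_scale kk R0) Pb.
Definition P1op : op (KH H) := blk Pb (op_scale (- kk) R0) (op_scale (- kk) R0) Pa.

Lemma J_Ji u : Jop (Jiop u) = u.
Proof.
case: u => u1 u2; rewrite /Jop /Jiop !blkE /=.
congr (_, _).
  rewrite !(opD, opZ, op0, addr0, add0r) !TS.
  apply: ext_l => z; rewrite !(ipDl, ipZl, ipNl, ip0l).
  field. exact: rnz.
rewrite !(opD, opZ, op0, addr0, add0r) !SA.
apply: ext_l => z; rewrite !(ipDl, ipZl, ipNl, ip0l).
field. exact: rnz.
Qed.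

Lemma rkz : 1 - ((r ^+ 2)%:C)%C != 0 :> R[i].
Proof. apply: ReNZ => /=; apply/eqP; have := r0; have := r1; nra. Qed.

Ltac nzs := repeat (apply/andP; split); apply: ReNZ => /=; apply/eqP;
  have := r0; have := r1; nra.
Ltac lsimp := rewrite ?(opD, opZ, opN, op0, addr0, add0r, scaler0).
Ltac ipc := apply: ext_l => z; rewrite ?(ipDl, ipZl, ipNl, ip0l, ipBl).

Lemma Ji_J u : Jiop (Jop u) = u.
Proof.
case: u => u1 u2; rewrite /Jop /Jiop !blkE /=.
congr (_, _).
  lsimp; rewrite !ST !AS; ipc; field; nzs.
lsimp; rewrite !AS; ipc; field; nzs.
Qed.

Lemma J_adj u v : hinner (Jop u) v = hinner u (Jsop v).
Proof.
case: u => u1 u2; case: v => v1 v2; rewrite /Jop /Jsop !blkE !Kip /=.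
lsimp; rewrite !(ipDl, ipZl, ipDr, ipZr, ip0l, ip0r) !conjR adjT adjSis R0sa adjSis.
ring.
Qed.

Lemma key2 y : R0 (S0 (Sis (R0 y))) + ((r ^+ 2)%:C)%C *: S0 (Sis y)
   = y + ((r ^+ 2)%:C)%C *: y - A (T y).
Proof.
have -> : y = A (T (S0 (Sis y))) by rewrite TS AS.
set w := S0 (Sis (A (T (S0 (Sis y))))).
rewrite R0C SA ST R0sq.
rewrite /w SA ST.
ipc; rewrite ?(ipDl, ipZl, ipNl, ip0l, ipBl); ring.
Qed.

Lemma JsJ u : Jsop (Jop u) = P0op u + ((r ^+ 2)%:C)%C *: P1op u.
Proof.
case: u => u1 u2; rewrite /Jop /Jsop /P0op /P1op !blkE /=.
congr (_, _).
  rewrite /=; lsimp; rewrite !AS; ipc; rewrite /kk; field; nzs.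
rewrite /=; lsimp; rewrite !ST scalerA.
have e : R0 (S0 (Sis (R0 u2))) + ((r%:C)%C * (r%:C)%C) *: S0 (Sis u2)
   = u2 + ((r ^+ 2)%:C)%C *: u2 - A (T u2).
  rewrite -key2; congr (_ + (_ *: _)); ring.
rewrite -addrA e.
ipc; rewrite /kk; field; nzs.
Qed.

Lemma P0_idem u : P0op (P0op u) = P0op u.
Proof.
case: u => u1 u2; rewrite /P0op !blkE /=.
congr (_, _); rewrite /=; lsimp; rewrite ?R0C; lsimp; rewrite ?R0sq; lsimp;
  ipc; rewrite /kk; field; nzs.
Qed.

Lemma P1_idem u : P1op (P1op u) = P1op u.
Proof.
case: u => u1 u2; rewrite /P1op !blkE /=.
congr (_, _); rewrite /=; lsimp; rewrite ?R0C; lsimp; rewrite ?R0sq; lsimp;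
  ipc; rewrite /kk; field; nzs.
Qed.

Lemma P0_sa u v : hinner (P0op u) v = hinner u (P0op v).
Proof.
case: u => u1 u2; case: v => v1 v2; rewrite /P0op !blkE !Kip /=.
rewrite !(ipDl, ipZl, ipDr, ipZr, ip0l, ip0r) !conjR !Ssa' !R0sa.
ring.
Qed.

Lemma P1_sa u v : hinner (P1op u) v = hinner u (P1op v).
Proof.
case: u => u1 u2; case: v => v1 v2; rewrite /P1op !blkE !Kip /=.
rewrite !(ipDl, ipZl, ipDr, ipZr, ip0l, ip0r) !conjR !Ssa' !R0sa.
ring.
Qed.

Lemma P01 u : P0op u + P1op u = u.
Proof.
case: u => u1 u2; rewrite /P0op /P1op !blkE /=.
congr (_, _); rewrite /=; lsimp; ipc; rewrite /kk; field; nzs.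
Qed.

Lemma J_V x : Jop ((x, 0) : (H * H)%type) = ((T x, 0) : (H * H)%type).
Proof. by rewrite /Jop blkE /=; lsimp. Qed.
Lemma Ji_V x : Jiop ((x, 0) : (H * H)%type) = ((S0 x, 0) : (H * H)%type).
Proof. by rewrite /Jiop blkE /=; lsimp. Qed.

End Fwd2.
Section Forward.
Variable R : realType.
Variable r : R.
Hypothesis r0 : 0 < r.
Hypothesis r1 : r < 1.
Variable H : Hilbert R.
Local Notation ip := (@hinner R H).
Local Notation nrm := (@hnorm R H).
Variables T S0 : op H.
Hypothesis TS : forall x, T (S0 x) = x.
Hypothesis ST : forall x, S0 (T x) = x.
Hypothesis Tc : forall x, nrm (T x) <= nrm x.
Hypothesis Sc : forall x, r * nrm (S0 x) <= nrm x.

Definition Vf (x : H) : KH H := ((x, 0) : (H * H)%type).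
Definition Vsf (u : KH H) : H := u.1.

Lemma Vf_lin : @lin _ H (KH H) Vf.
Proof.
move=> a x y; rewrite /Vf.
have -> : a *: (((x, 0) : (H * H)%type) : KH H) + (((y, 0) : (H * H)%type) : KH H)
   = ((a *: x + y, a *: 0 + 0) : (H * H)%type) by [].
by rewrite scaler0 addr0.
Qed.
Lemma Vf_iso x : hnorm (Vf x) = nrm x.
Proof.
rewrite Knrm_def /Vf /= nrm0 expr0n /= addr0 sqrtr_sqr ger0_norm //; exact: nrm_ge0.
Qed.
Lemma Vf_bo : bounded_op Vf.
Proof.
apply/(proj2 (bounded_opP Vf)); split; first exact: Vf_lin.
by exists 1; split => // x; rewrite Vf_iso mul1r.
Qed.
Lemma Vsf_bo : bounded_op Vsf.
Proof.
apply/(proj2 (bounded_opP Vsf)); split; first by move=> a x y.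
by exists 1; split => // u; rewrite mul1r /Vsf; exact: Knrm1.
Qed.

Lemma iterJV (J : KH H -> KH H) (F : H -> H) :
  (forall x, J (Vf x) = Vf (F x)) -> forall k x, iter k J (Vf x) = Vf (iter k F x).
Proof. move=> h; elim=> [|k ih] x //=; by rewrite ih h. Qed.

Lemma forward : exists (K : Hilbert R) (V : H -> K) (J : K -> K),
     hisometry V /\ invertible_op J /\ calC1r r J /\
     exists Vs : K -> H, is_adjoint V Vs /\
       forall (n : int) (Ti : H -> H) (Ji : K -> K),
         is_inverse T Ti -> is_inverse J Ji ->
         forall x : H, zpow T Ti n x = Vs (zpow J Ji n (V x)).
Proof.
have [A adjA] := adjoint_ex T.
have [Sis adjS] := adjoint_ex S0.
have AS' : forall x, A (Sis x) = x.
  by move=> x; apply: ext_r => z; rewrite -adjA -adjS ST.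
have SA' : forall x, Sis (A x) = x.
  by move=> x; apply: ext_r => z; rewrite -adjS -adjA TS.
have [R0 [R0sa R0C R0sq]] := R0_ex r0 r1 ST Tc Sc adjA.
have JJi : forall u, Jop r T Sis R0 (Jiop r S0 A Sis R0 u) = u := J_Ji r0 R0 TS SA'.
have JiJ : forall u, Jiop r S0 A Sis R0 (Jop r T Sis R0 u) = u := Ji_J r0 r1 R0 ST AS'.
exists (KH H), Vf, (Jop r T Sis R0).
split; first by split; [exact: Vf_bo| exact: Vf_iso].
split.
  exists (Jiop r S0 A Sis R0); split; first exact: op_bo.
  by split; first exact: op_bo.
split.
  split; first exact: op_bo.
  exists (Jsop r S0 A R0), (P0op r T A R0), (P1op r T A R0).
  split.
    split; first exact: op_bo.
    split; first exact: op_bo.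
    move=> x y; rewrite /inner; exact: J_adj adjA adjS R0sa x y.
  split.
    split; first exact: op_bo.
    split; first exact: (P0_idem r0 r1 R0C R0sq).
    move=> x y; rewrite /inner; exact: P0_sa adjA R0sa x y.
  split.
    split; first exact: op_bo.
    split; first exact: (P1_idem r0 r1 R0C R0sq).
    move=> x y; rewrite /inner; exact: P1_sa adjA R0sa x y.
  split; first by move=> u; have := (P01 r0 r1 T A R0 u).
  by move=> u; have := JsJ r0 r1 TS ST AS' SA' R0C R0sq u.
exists Vsf; split.
  split; first exact: Vf_bo.
  split; first exact: Vsf_bo.
  by move=> x u; rewrite /inner Kip /Vf /Vsf /= ip0l addr0.
move=> n Ti Ji' [_ [_ [hTi1 hTi2]]] [_ [_ [hJi1 hJi2]]] x.
have eTi : forall y, Ti y = S0 y by move=> y; rewrite -{1}(TS y) hTi1.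
have eJi : forall u, Ji' u = Jiop r S0 A Sis R0 u by move=> u; rewrite -{1}(JJi u) hJi1.
case: n => k; rewrite /zpow.
  rewrite (iterJV (F := T)) // => y.
  exact: J_V.
have -> : iter k.+1 Ti x = iter k.+1 S0 x.
  by elim: k.+1 => [|j ih] //=; rewrite ih eTi.
rewrite (iterJV (F := S0)) // => y; rewrite eJi; exact: Ji_V.
Qed.
End Forward.

Section Backward.
Variable R : realType.

Lemma adj_c (H K : Hilbert R) (V : H -> K) (Vs : K -> H) :
  (forall x, hnorm (V x) = hnorm x) -> (forall x y, hinner (V x) y = hinner x (Vs y)) ->
  forall y, hnorm (Vs y) <= hnorm y.
Proof.
move=> iso adj y.
have e : hnorm (Vs y) ^+ 2 <= hnorm (Vs y) * hnorm y.
  rewrite nrm2 -adj; apply: le_trans (CS _ _) _; rewrite iso //.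
have g1 := nrm_ge0 (Vs y); have g2 := nrm_ge0 y.
have [z|nz] := eqVneq (hnorm (Vs y)) 0; first by rewrite z.
have p : 0 < hnorm (Vs y) by rewrite lt_def nz g1.
rewrite -(ler_pM2l p); nra.
Qed.

Lemma proj_re (K : Hilbert R) (P : K -> K) : (forall x, P (P x) = P x) ->
  (forall x y, hinner (P x) y = hinner x (P y)) ->
  forall z, complex.Re (hinner z (P z)) = hnorm (P z) ^+ 2.
Proof. by move=> idem sa z; rewrite nrm2 sa idem. Qed.

Lemma J_bounds (r : R) (K : Hilbert R) (J : K -> K) : 0 < r -> r < 1 -> calC1r r J ->
  forall z, r * hnorm z <= hnorm (J z) /\ hnorm (J z) <= hnorm z.
Proof.
move=> r0 r1 [bJ [Js [P0 [P1 [[_ [_ adj]] [[bP0 [i0 s0]] [[bP1 [i1 s1]] [P01 JsJ]]]]]]]] z.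
have e1 : hnorm (J z) ^+ 2 = hnorm (P0 z) ^+ 2 + r ^+ 2 * hnorm (P1 z) ^+ 2.
  rewrite nrm2; have := adj z (J z); rewrite /inner => ->.
  rewrite JsJ ipDr ipZr conjR ReD ReRM !proj_re //.
have e2 : hnorm z ^+ 2 = hnorm (P0 z) ^+ 2 + hnorm (P1 z) ^+ 2.
  rewrite nrm2 -{2}(P01 z) ipDr ReD !proj_re //.
have g1 := nrm_ge0 z; have g2 := nrm_ge0 (J z).
have g3 := sqr_ge0 (hnorm (P0 z)); have g4 := sqr_ge0 (hnorm (P1 z)).
have hr : 0 <= r by exact: ltW.
have hr2 : r ^+ 2 <= 1 by rewrite expr_le1 // ltW.
split.
  rewrite -(ler_pXn2r (n:=2)) ?nnegrE ?mulr_ge0 // exprMn e1 e2; nra.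
rewrite -(ler_pXn2r (n:=2)) ?nnegrE // e1 e2; nra.
Qed.

End Backward.

Unset Implicit Arguments. Set Strict Implicit.

Theorem theorem2p4 (R : realType) (r : R) (H : Hilbert R) (T : H -> H) :
  0 < r < 1 -> invertible_op T ->
  (C1r r T <->
   exists (K : Hilbert R) (V : H -> K) (J : K -> K),
     hisometry V /\ invertible_op J /\ calC1r r J /\
     exists Vs : K -> H, is_adjoint V Vs /\
       forall (n : int) (Ti : H -> H) (Ji : K -> K),
         is_inverse T Ti -> is_inverse J Ji ->
         forall x : H, zpow T Ti n x = Vs (zpow J Ji n (V x))).
Proof.
move=> /andP [r0 r1] [Ti0 hTi0]; split.
  case=> S0 [[bT [bS [ST TS]]] [hT hS]].
  have [lT bdT] := (proj1 (bounded_opP T)) bT.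
  have [lS bdS] := (proj1 (bounded_opP S0)) bS.
  pose To : op H := Op lT bdT.
  pose So : op H := Op lS bdS.
  have Tc : forall x, hnorm (To x) <= hnorm x by move=> x; rewrite /= -[X in _ <= X]mul1r; exact: hT.
  have Sc : forall x, r * hnorm (So x) <= hnorm x.
    move=> x; have := hS x; rewrite mul1r nrmR ger0_norm //; exact: ltW.
  exact: (@forward R r r0 r1 H To So TS ST Tc Sc).
case=> K [V [J [[bV isoV] [[Ji hJi] [hC [Vs [[_ [bVs adjV]] hz]]]]]]].
have Vc := adj_c isoV adjV.
have Jb := J_bounds r0 r1 hC.
exists Ti0; split; first exact: hTi0.
split.
  move=> x; have := hz (Posz 1) Ti0 Ji hTi0 hJi x; rewrite /= => ->.
  rewrite mul1r; apply: le_trans (Vc _) _; rewrite -(isoV x).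
  by case: (Jb (V x)).
move=> x; have := hz (Negz 0) Ti0 Ji hTi0 hJi x; rewrite /= => ->.
rewrite mul1r nrmR ger0_norm; last exact: ltW.
case: hJi => _ [_ [_ JJi]].
case: (Jb (Ji (V x))) => h _; rewrite JJi isoV in h.
apply: le_trans _ h; apply: ler_wpM2l; [exact: ltW| exact: Vc].
Qed.
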